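(* Let $\varepsilon\in(0,\tfrac12)$ and let $W_n=W_n^{\varepsilon}$ be the weighted diamonds defined below. Then there is a constant $C(\varepsilon)<\infty$ such that for every $n\ge 0$ the metric space $V(W_n)$ (with weighted shortest path distance) admits a bilipschitz embedding into $\ell_2$ with distortion at most $C(\varepsilon)$.
   Context: Diamonds: $D_0$ is an edge; $D_i$ is obtained from $D_{i-1}$ by replacing each edge $uv$ by a quadrilateral $u,a,v,b$ (so $V(D_{i-1})\subseteq V(D_i)$ and the edges of $D_{i-1}$ are not edges of $D_i$). Weighted diamonds: $W_0=D_0$ with its edge of weight $1$; for $n\ge1$, $W_n$ has vertex set $V(D_n)$ and edge set $E(W_{n-1})\cup E(D_n)$, where edges of $W_{n-1}$ keep their weights and each edge of $D_n$ gets weight $(\tfrac12+\varepsilon)^n$. Thus $W_n$ has all edges of $D_0,D_1,\dots,D_n$, the edges of $D_j$ having weight $(\tfrac12+\varepsilon)^j$. $W_n$ carries the weighted shortest path metric. *)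

(* Defs.v *)
From Stdlib Require Import Reals List.
Import ListNotations.
Open Scope R_scope.

(* The four edges of the quadrilateral u,a,v,b replacing an edge uv:
   Q_ua = u-a, Q_av = a-v, Q_vb = v-b, Q_bu = b-u. *)
Inductive quad := Q_ua | Q_av | Q_vb | Q_bu.

Fixpoint Etype (n : nat) : Type :=
  match n with
  | O => unit
  | S m => (Etype m * quad)%type
  end.

(* Vertices of D_n: either a vertex of D_(n-1) (so V(D_(n-1)) ⊆ V(D_n)),
   or a new vertex a (false) / b (true) created on an edge of D_(n-1).
   D_0 has the two vertices false, true. *)
Fixpoint Vtype (n : nat) : Type :=
  match n with
  | O => bool
  | S m => (Vtype m + (Etype m * bool))%type
  end.

Fixpoint ends (n : nat) : Etype n -> Vtype n * Vtype n :=
  match n as n0 return Etype n0 -> Vtype n0 * Vtype n0 with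
  | O => fun _ => (false, true)
  | S m => fun eq =>
      let (e, q) := eq in
      let (u, v) := ends m e in
      match q with
      | Q_ua => (inl u, inr (e, false))
      | Q_av => (inr (e, false), inl v)
      | Q_vb => (inl v, inr (e, true))
      | Q_bu => (inr (e, true), inl u)
      end
  end.

Fixpoint Elist (n : nat) : list (Etype n) :=
  match n as n0 return list (Etype n0) with
  | O => [tt]
  | S m => flat_map (fun e => [(e, Q_ua); (e, Q_av); (e, Q_vb); (e, Q_bu)]) (Elist m)
  end.

Fixpoint WE (eps : R) (n : nat) : list (Vtype n * Vtype n * R) :=
  match n as n0 return list (Vtype n0 * Vtype n0 * R) with
  | O => [(false, true, 1)]
  | S m =>
      map (fun t : Vtype m * Vtype m * R =>
             let '(u, v, w) := t in ((inl u : Vtype (S m)), (inl v : Vtype (S m)), w))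
          (WE eps m)
      ++ map (fun e => let (u, v) := ends (S m) e in (u, v, (/2 + eps) ^ (S m)))
             (Elist (S m))
  end.

Inductive walk (eps : R) (n : nat) : Vtype n -> Vtype n -> R -> Prop :=
  | walk_nil : forall x, walk eps n x x 0
  | walk_cons : forall x y z w L,
      (In (x, y, w) (WE eps n) \/ In (y, x, w) (WE eps n)) ->
      walk eps n y z L -> walk eps n x z (w + L).

Definition is_dist (eps : R) (n : nat) (x y : Vtype n) (d : R) : Prop :=
  (forall L, walk eps n x y L -> d <= L) /\
  (forall e, 0 < e -> exists L, walk eps n x y L /\ L < d + e).

Definition in_l2 (x : nat -> R) : Prop :=
  exists l, infinite_sum (fun i => (x i) ^ 2) l.

Definition l2_sqdist (x y : nat -> R) (S : R) : Prop :=
  infinite_sum (fun i => (x i - y i) ^ 2) S.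

(* Main.v *)
Require Import Defs.
From Stdlib Require Import Reals List.
From Stdlib Require Import Lra Lia Psatz FinFun.
From Stdlib Require Import Program.Equality.
Import ListNotations.
Open Scope R_scope.

Definition quad_eq_dec : forall a b : quad, {a=b}+{a<>b}.
Proof. decide equality. Defined.

Definition Etype_eq_dec : forall n (a b : Etype n), {a=b}+{a<>b}.
Proof.
  induction n; simpl; intros.
  - destruct a, b; left; reflexivity.
  - destruct a as [a qa], b as [b qb].
    destruct (IHn a b) as [H|H]; [|right; intro E; inversion E; auto].
    destruct (quad_eq_dec qa qb) as [H'|H']; [left; subst; auto|right; intro E; inversion E; auto].
Defined.

Definition Vtype_eq_dec : forall n (a b : Vtype n), {a=b}+{a<>b}.
Proof.
  induction n; simpl; intros.
  - decide equality.
  - destruct a as [a|[a sa]], b as [b|[b sb]].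
    + destruct (IHn a b); [left; subst; auto|right; intro E; inversion E; auto].
    + right; discriminate.
    + right; discriminate.
    + destruct (Etype_eq_dec n a b); [|right; intro E; inversion E; auto].
      destruct (Bool.bool_dec sa sb); [left; subst; auto|right; intro E; inversion E; auto].
Defined.

Lemma Elist_complete : forall n (e : Etype n), In e (Elist n).
Proof.
  induction n; simpl; intros.
  - destruct e; auto.
  - destruct e as [e q]. apply in_flat_map. exists e. split; auto.
    destruct q; simpl; tauto.
Qed.

Lemma Elist_NoDup : forall n, NoDup (Elist n).
Proof.
  induction n; simpl.
  - constructor; auto. constructor.
  - induction (Elist n) as [|a l IH]; simpl; [constructor|].
    inversion IHn; subst. specialize (IH H2).
    assert (Hn : forall q, ~ In (a, q) (flat_map (fun e : Etype n => [(e, Q_ua); (e, Q_av); (e, Q_vb); (e, Q_bu)]) l)).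
    { intros q Hin. apply in_flat_map in Hin. destruct Hin as [e [He Hq]].
      simpl in Hq. destruct Hq as [E|[E|[E|[E|[]]]]]; inversion E; subst; auto. }
    repeat constructor; auto; simpl; intuition (try discriminate); try (eapply Hn; eauto).
Qed.

Fixpoint Vlist (n : nat) : list (Vtype n) :=
  match n as n0 return list (Vtype n0) with
  | O => [false; true]
  | S m => map (fun z => (inl z : Vtype (S m))) (Vlist m) ++
           flat_map (fun e => [(inr (e, false) : Vtype (S m)); inr (e, true)]) (Elist m)
  end.

Lemma Vlist_complete : forall n (z : Vtype n), In z (Vlist n).
Proof.
  induction n; simpl; intros.
  - destruct z; auto.
  - apply in_or_app. destruct z as [z|[e s]].
    + left. apply in_map with (f := fun z => (inl z : Vtype (S n))). auto.
    + right. apply in_flat_map. exists e. split; [apply Elist_complete|].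
      destruct s; simpl; auto.
Qed.

Lemma NoDup_app' : forall (A : Type) (l1 l2 : list A), NoDup l1 -> NoDup l2 ->
  (forall a, In a l1 -> ~ In a l2) -> NoDup (l1 ++ l2).
Proof.
  induction l1; simpl; intros; auto.
  inversion H; subst. constructor.
  - rewrite in_app_iff. intros [H'|H']; [tauto|]. eapply H1; eauto.
  - apply IHl1; auto.
Qed.

Lemma Vlist_NoDup : forall n, NoDup (Vlist n).
Proof.
  induction n; simpl.
  - constructor; simpl; [intuition discriminate|]. constructor; auto; constructor.
  - apply NoDup_app'.
    + apply Injective_map_NoDup; auto. intros a b E; inversion E; auto.
    + pose proof (Elist_NoDup n) as ND. induction (Elist n) as [|a l IH]; simpl; [constructor|].
      inversion ND; subst. specialize (IH H2).
      assert (Hn : forall s, ~ In (inr (a, s) : Vtype (S n)) (flat_map (fun e : Etype n => [(inr (e, false) : Vtype (S n)); inr (e, true)]) l)).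
      { intros s Hin. apply in_flat_map in Hin. destruct Hin as [e [He Hq]].
        simpl in Hq. destruct Hq as [E|[E|[]]]; inversion E; subst; auto. }
      repeat constructor; auto; simpl; intuition (try discriminate); try (eapply Hn; eauto).
    + intros a Ha Hb. apply in_map_iff in Ha. destruct Ha as [z [E _]]. subst.
      apply in_flat_map in Hb. destruct Hb as [e [_ Hq]]. simpl in Hq. intuition discriminate.
Qed.

Fixpoint sqd (l1 l2 : list R) : R :=
  match l1, l2 with
  | a :: l1', b :: l2' => (a - b)^2 + sqd l1' l2'
  | _, _ => 0
  end.

Fixpoint crs (l1 l2 l3 : list R) : R :=
  match l1, l2, l3 with
  | a :: l1', b :: l2', c :: l3' => (a - b) * (b - c) + crs l1' l2' l3'
  | _, _, _ => 0
  end.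

Lemma sqd_nonneg : forall l1 l2, 0 <= sqd l1 l2.
Proof. induction l1; destruct l2; simpl; try lra. specialize (IHl1 l2). pose proof (pow2_ge_0 (a - r)). lra. Qed.

Lemma sqd_sym : forall l1 l2, sqd l1 l2 = sqd l2 l1.
Proof. induction l1; destruct l2; simpl; auto. rewrite IHl1. ring. Qed.

Lemma sqd_split : forall l1 l2 l3, length l1 = length l2 -> length l2 = length l3 ->
  sqd l1 l3 = sqd l1 l2 + 2 * crs l1 l2 l3 + sqd l2 l3.
Proof.
  induction l1; destruct l2; destruct l3; simpl; intros; try discriminate; try ring.
  rewrite (IHl1 l2 l3) by lia. ring.
Qed.

Lemma quad_nonneg : forall al be l1 l2 l3,
  0 <= al^2 * sqd l1 l2 - 2 * al * be * crs l1 l2 l3 + be^2 * sqd l2 l3.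
Proof.
  induction l1; intros l2 l3.
  { replace (sqd [] l2) with 0 by (destruct l2; reflexivity).
    replace (crs [] l2 l3) with 0 by (destruct l2; reflexivity).
    pose proof (sqd_nonneg l2 l3). pose proof (pow2_ge_0 be). nra. }
  destruct l2.
  { replace (sqd (a :: l1) []) with 0 by reflexivity.
    replace (crs (a::l1) [] l3) with 0 by reflexivity.
    replace (sqd [] l3) with 0 by (destruct l3; reflexivity). lra. }
  destruct l3.
  { replace (crs (a::l1) (r::l2) []) with 0 by reflexivity.
    replace (sqd (r::l2) []) with 0 by reflexivity.
    change (sqd (a :: l1) (r :: l2)) with ((a - r)^2 + sqd l1 l2).
    pose proof (sqd_nonneg l1 l2); pose proof (pow2_ge_0 al); pose proof (pow2_ge_0 (a-r)). nra. }
  change (sqd (a :: l1) (r :: l2)) with ((a - r)^2 + sqd l1 l2).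
  change (sqd (r :: l2) (r0 :: l3)) with ((r - r0)^2 + sqd l2 l3).
  change (crs (a :: l1) (r :: l2) (r0::l3)) with ((a - r) * (r - r0) + crs l1 l2 l3).
  specialize (IHl1 l2 l3).
  pose proof (pow2_ge_0 (al * (a - r) - be * (r - r0))) as H.
  match goal with |- 0 <= ?E => replace E with ((al * (a - r) - be * (r - r0))^2 + (al ^ 2 * sqd l1 l2 - 2 * al * be * crs l1 l2 l3 + be ^ 2 * sqd l2 l3)) by ring end.
  lra.
Qed.

Lemma crs_bound : forall l1 l2 l3,
  crs l1 l2 l3 <= sqrt (sqd l1 l2) * sqrt (sqd l2 l3).
Proof.
  intros.
  set (A := sqd l1 l2). set (C := sqd l2 l3). set (B := crs l1 l2 l3).
  assert (HA : 0 <= A) by apply sqd_nonneg. assert (HC : 0 <= C) by apply sqd_nonneg.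
  assert (Hq : forall lam, 0 < lam -> 2 * B <= lam * A + C / lam).
  { intros lam Hl. pose proof (quad_nonneg (sqrt lam) (/ sqrt lam) l1 l2 l3) as H.
    fold A B C in H.
    assert (Hs : 0 < sqrt lam) by (apply sqrt_lt_R0; auto).
    assert (Hls : lam = sqrt lam * sqrt lam) by (rewrite sqrt_sqrt; lra).
    set (s := sqrt lam) in *. rewrite Hls.
    replace ((/ s) ^ 2) with (/ (s*s)) in H by (field; lra).
    replace (2 * s * / s * B) with (2 * B) in H by (field; lra).
    replace (C / (s * s)) with (/ (s*s) * C) by (field; lra).
    replace (s^2) with (s*s) in H by ring. lra. }
  destruct (Req_dec A 0) as [A0|A0].
  - rewrite A0, sqrt_0, Rmult_0_l.
    destruct (Rle_dec B 0); auto.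
    exfalso. assert (HB : 0 < B) by lra.
    specialize (Hq ((C + 1) / B)). rewrite A0 in Hq.
    assert (0 < (C+1)/B) by (apply Rdiv_lt_0_compat; lra).
    specialize (Hq H).
    replace (C / ((C + 1) / B)) with (C * B / (C + 1)) in Hq by (field; lra).
    assert (C * B / (C+1) < B).
    { apply Rmult_lt_reg_r with (C+1); [lra|]. unfold Rdiv. rewrite Rmult_assoc, Rinv_l by lra. nra. }
    lra.
  - destruct (Req_dec C 0) as [C0|C0].
    + rewrite C0, sqrt_0, Rmult_0_r.
      destruct (Rle_dec B 0); auto.
      exfalso. assert (HB : 0 < B) by lra.
      assert (HA' : 0 < A) by lra.
      specialize (Hq (B / A)). rewrite C0 in Hq.
      assert (0 < B / A) by (apply Rdiv_lt_0_compat; lra).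
      specialize (Hq H).
      replace (B / A * A) with B in Hq by (field; lra).
      replace (0 / (B / A)) with 0 in Hq by (field; lra). lra.
    + assert (HA' : 0 < A) by lra. assert (HC' : 0 < C) by lra.
      assert (sA : 0 < sqrt A) by (apply sqrt_lt_R0; auto).
      assert (sC : 0 < sqrt C) by (apply sqrt_lt_R0; auto).
      specialize (Hq (sqrt C / sqrt A)).
      assert (0 < sqrt C / sqrt A) by (apply Rdiv_lt_0_compat; lra).
      specialize (Hq H).
      assert (E : sqrt C / sqrt A * A + C / (sqrt C / sqrt A) = 2 * (sqrt A * sqrt C)).
      { assert (EA : A = sqrt A * sqrt A) by (rewrite sqrt_sqrt; lra).
        assert (EC : C = sqrt C * sqrt C) by (rewrite sqrt_sqrt; lra).
        assert (G : forall a c x y, 0 < a -> 0 < c -> x = a * a -> y = c * c -> c / a * x + y / (c / a) = 2 * (a * c)).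
        { intros a c x y Ha Hc -> ->. field. lra. }
        apply G; auto. }
      lra.
Qed.

Lemma sqd_triangle : forall l1 l2 l3, length l1 = length l2 -> length l2 = length l3 ->
  sqrt (sqd l1 l3) <= sqrt (sqd l1 l2) + sqrt (sqd l2 l3).
Proof.
  intros. rewrite (sqd_split l1 l2 l3) by auto.
  pose proof (crs_bound l1 l2 l3).
  pose proof (sqd_nonneg l1 l2). pose proof (sqd_nonneg l2 l3).
  pose proof (sqrt_pos (sqd l1 l2)). pose proof (sqrt_pos (sqd l2 l3)).
  rewrite <- (sqrt_Rsqr (sqrt (sqd l1 l2) + sqrt (sqd l2 l3))) by lra.
  apply sqrt_le_1_alt. unfold Rsqr.
  replace ((sqrt (sqd l1 l2) + sqrt (sqd l2 l3)) * (sqrt (sqd l1 l2) + sqrt (sqd l2 l3)))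
    with (sqrt (sqd l1 l2) * sqrt (sqd l1 l2) + 2 * (sqrt (sqd l1 l2) * sqrt (sqd l2 l3)) + sqrt (sqd l2 l3) * sqrt (sqd l2 l3)) by ring.
  rewrite !sqrt_sqrt by auto. lra.
Qed.

Lemma sqd_app : forall l1 l1' l2 l2', length l1 = length l1' ->
  sqd (l1 ++ l2) (l1' ++ l2') = sqd l1 l1' + sqd l2 l2'.
Proof.
  induction l1; destruct l1'; simpl; intros; try discriminate; try ring.
  rewrite IHl1 by lia. ring.
Qed.

Definition lsum {A : Type} (f : A -> R) (l : list A) : R :=
  fold_right (fun z acc => f z + acc) 0 l.

Lemma sqd_map : forall {A : Type} (c : R) (a b : A -> R) (l : list A),
  sqd (map (fun z => c * a z) l) (map (fun z => c * b z) l) = c^2 * lsum (fun z => (a z - b z)^2) l.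
Proof. unfold lsum. induction l as [|w l IHl]; cbn [map sqd fold_right]; [ring|]. rewrite IHl. ring. Qed.

Lemma lsum_nonneg : forall {A : Type} (f : A -> R) l, (forall z, 0 <= f z) -> 0 <= lsum f l.
Proof. induction l; simpl; intros; [lra|]. pose proof (H a). specialize (IHl H). lra. Qed.

Lemma lsum_le : forall {A : Type} (f g : A -> R) l, (forall z, f z <= g z) -> lsum f l <= lsum g l.
Proof. induction l; simpl; intros; [lra|]. pose proof (H a) as H1. specialize (IHl H). lra. Qed.

Lemma lsum_plus : forall {A : Type} (f g : A -> R) l, lsum (fun z => f z + g z) l = lsum f l + lsum g l.
Proof. induction l; simpl; intros; [lra|]. rewrite IHl. ring. Qed.

Lemma lsum_scal : forall {A : Type} (c : R) (f : A -> R) l, lsum (fun z => c * f z) l = c * lsum f l.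
Proof. induction l; simpl; intros; [lra|]. rewrite IHl. ring. Qed.

Lemma lsum_ge1 : forall {A : Type} (f : A -> R) l u, (forall z, 0 <= f z) -> In u l -> f u <= lsum f l.
Proof.
  induction l; simpl; intros; [tauto|]. destruct H0.
  - subst. pose proof (lsum_nonneg f l H). lra.
  - specialize (IHl u H H0). pose proof (H a). lra.
Qed.

Lemma lsum_ge2 : forall {A : Type} (f : A -> R) l u v, (forall z, 0 <= f z) -> In u l -> In v l -> u <> v ->
  f u + f v <= lsum f l.
Proof.
  induction l; simpl; intros; [tauto|].
  destruct H0 as [H0|H0]; destruct H1 as [H1|H1].
  - subst. tauto.
  - subst. pose proof (lsum_ge1 f l v H H1). lra.
  - subst. pose proof (lsum_ge1 f l u H H0). lra.
  - specialize (IHl u v H H0 H1 H2). pose proof (H a). lra.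
Qed.

Inductive posn (m : nat) : Type := PV (x : Vtype m) | PE (e : Etype m) (t : R).
Arguments PV {m}. Arguments PE {m}.

Definition ind m (u z : Vtype m) : R := if Vtype_eq_dec m z u then 1 else 0.

Definition val m (p : posn m) (z : Vtype m) : R :=
  match p with
  | PV x => ind m x z
  | PE e t => t * ind m (fst (ends m e)) z + (1 - t) * ind m (snd (ends m e)) z
  end.

Definition g (q : quad) (t : R) : R :=
  match q with Q_ua => (1 + t) / 2 | Q_av => t / 2 | Q_vb => (1 - t) / 2 | Q_bu => 1 - t / 2 end.

Definition down m (p : posn (S m)) : posn m :=
  match p with
  | PV x => match x with inl z => PV z | inr (e, _) => PE e (/2) end
  | PE e t => PE (fst e) (g (snd e) t)
  end.

Fixpoint coords (r : R) (m : nat) : posn m -> list R :=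
  match m return posn m -> list R with
  | O => fun p => map (fun z => r^0 * val 0 p z) (Vlist 0)
  | S m' => fun p => map (fun z => r^(S m') * val (S m') p z) (Vlist (S m')) ++ coords r m' (down m' p)
  end.

Definition Bl m (p p' : posn m) := lsum (fun z => (val m p z - val m p' z)^2) (Vlist m).
Definition Sq r m (p p' : posn m) := sqd (coords r m p) (coords r m p').

Lemma coords_len : forall r m (p p' : posn m), length (coords r m p) = length (coords r m p').
Proof.
  induction m; intros.
  - reflexivity.
  - simpl coords. rewrite !length_app, !length_map. rewrite (IHm _ (down m p')). auto.
Qed.

Lemma Sq_S : forall r m (p p' : posn (S m)),
  Sq r (S m) p p' = (r^(S m))^2 * Bl (S m) p p' + Sq r m (down m p) (down m p').
Proof.
  intros. unfold Sq. simpl coords. rewrite sqd_app by (rewrite !length_map; auto).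
  rewrite sqd_map. reflexivity.
Qed.

Lemma Sq_0 : forall r (p p' : posn 0), Sq r 0 p p' = (r^0)^2 * Bl 0 p p'.
Proof. intros. unfold Sq.
  change (coords r 0 p) with (map (fun z => r^0 * val 0 p z) (Vlist 0)).
  change (coords r 0 p') with (map (fun z => r^0 * val 0 p' z) (Vlist 0)).
  rewrite sqd_map. reflexivity. Qed.

Lemma Bl_nonneg : forall m p p', 0 <= Bl m p p'.
Proof. intros. apply lsum_nonneg. intros. apply pow2_ge_0. Qed.

Lemma Sq_nonneg : forall r m p p', 0 <= Sq r m p p'.
Proof. intros. apply sqd_nonneg. Qed.

Lemma Sq_ge_B : forall r m p p', (r^m)^2 * Bl m p p' <= Sq r m p p'.
Proof.
  intros. destruct m.
  - rewrite Sq_0. lra.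
  - rewrite Sq_S. pose proof (Sq_nonneg r m (down m p) (down m p')). lra.
Qed.

Lemma Sq_down_le : forall r m p p', Sq r m (down m p) (down m p') <= Sq r (S m) p p'.
Proof.
  intros. rewrite Sq_S. pose proof (Bl_nonneg (S m) p p'). pose proof (pow2_ge_0 (r^(S m))). nra.
Qed.

Lemma Sq_sym : forall r m p p', Sq r m p p' = Sq r m p' p.
Proof. intros. unfold Sq. apply sqd_sym. Qed.

Lemma Sq_tri : forall r m p p' p'', sqrt (Sq r m p p'') <= sqrt (Sq r m p p') + sqrt (Sq r m p' p'').
Proof. intros. unfold Sq. apply sqd_triangle; apply coords_len. Qed.

Lemma ind_01 : forall m u z, ind m u z = 0 \/ ind m u z = 1.
Proof. intros. unfold ind. destruct (Vtype_eq_dec m z u); auto. Qed.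

Lemma lsum_ind_le1 : forall m u l, NoDup l -> lsum (fun z => ind m u z) l <= 1.
Proof.
  induction l; simpl; intros; [lra|].
  inversion H; subst. unfold ind at 1. destruct (Vtype_eq_dec m a u).
  - subst. assert (lsum (fun z => ind m u z) l = 0).
    { clear -H2. induction l; simpl; auto. unfold ind at 1. destruct (Vtype_eq_dec m a u).
      subst. simpl in H2. tauto. rewrite IHl; [lra|]. simpl in H2. tauto. }
    lra.
  - specialize (IHl H3). lra.
Qed.

Lemma Bl_upper : forall m p p' u v al be,
  (forall z, val m p z - val m p' z = al * ind m u z + be * ind m v z) ->
  Bl m p p' <= 2 * al^2 + 2 * be^2.
Proof.
  intros. unfold Bl.
  apply Rle_trans with (lsum (fun z => 2 * al^2 * ind m u z + 2 * be^2 * ind m v z) (Vlist m)).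
  - apply lsum_le. intros z. rewrite H.
    destruct (ind_01 m u z) as [E1|E1]; destruct (ind_01 m v z) as [E2|E2]; rewrite E1, E2;
      pose proof (pow2_ge_0 al); pose proof (pow2_ge_0 be); pose proof (pow2_ge_0 (al - be)); nra.
  - rewrite lsum_plus, !lsum_scal.
    pose proof (lsum_ind_le1 m u _ (Vlist_NoDup m)) as H0.
    pose proof (lsum_ind_le1 m v _ (Vlist_NoDup m)) as H1.
    change (lsum (ind m u) (Vlist m) <= 1) in H0.
    change (lsum (ind m v) (Vlist m) <= 1) in H1. clear H.
    pose proof (pow2_ge_0 al); pose proof (pow2_ge_0 be). nra.
Qed.

Definition inS m (p : posn m) (z : Vtype m) : Prop :=
  match p with PV x => z = x | PE e t => z = fst (ends m e) \/ z = snd (ends m e) end.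

Definition share m (p p' : posn m) : Prop := exists z, inS m p z /\ inS m p' z.

Lemma ind_ne : forall m u z, z <> u -> ind m u z = 0.
Proof. intros. unfold ind. destruct (Vtype_eq_dec m z u); tauto. Qed.

Lemma ind_eq : forall m u, ind m u u = 1.
Proof. intros. unfold ind. destruct (Vtype_eq_dec m u u); tauto. Qed.

Lemma val_notin : forall m p z, ~ inS m p z -> val m p z = 0.
Proof.
  intros. destruct p; simpl in *.
  - apply ind_ne; auto.
  - rewrite !ind_ne by tauto. ring.
Qed.

Lemma ends_neq : forall m e, fst (ends m e) <> snd (ends m e).
Proof.
  destruct m; simpl; intros.
  - discriminate.
  - destruct e as [e q]. destruct (ends m e). destruct q; simpl; discriminate.
Qed.

Lemma Bl_lower : forall m p p', ~ share m p p' -> / 2 <= Bl m p p'.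
Proof.
  intros. unfold Bl. destruct p as [x|e t].
  - pose proof (lsum_ge1 (fun z => (val m (PV x) z - val m p' z)^2) (Vlist m) x) as H1.
    simpl in H1. rewrite ind_eq, val_notin in H1.
    + simpl. apply Rle_trans with ((1 - 0)^2); [lra|]. apply H1.
      intros; apply pow2_ge_0. apply Vlist_complete.
    + intro. apply H. exists x. simpl. auto.
  - pose proof (lsum_ge2 (fun z => (val m (PE e t) z - val m p' z)^2) (Vlist m)
       (fst (ends m e)) (snd (ends m e))) as H1.
    pose proof (ends_neq m e) as Hne.
    simpl in H1. rewrite !ind_eq in H1. rewrite (ind_ne m (snd (ends m e)) (fst (ends m e))) in H1 by auto.
    rewrite (ind_ne m (fst (ends m e)) (snd (ends m e))) in H1 by auto.
    rewrite !(val_notin m p') in H1.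
    + simpl. eapply Rle_trans; [|apply H1; auto using Vlist_complete; intros; apply pow2_ge_0].
      pose proof (pow2_ge_0 (t - /2)). nra.
    + intro. apply H. exists (snd (ends m e)). simpl. auto.
    + intro. apply H. exists (fst (ends m e)). simpl. auto.
Qed.

Definition Icell m (p : posn m) (e : Etype m) (t : R) : Prop :=
  p = PE e t \/ (p = PV (fst (ends m e)) /\ t = 1) \/ (p = PV (snd (ends m e)) /\ t = 0).

Lemma val_I : forall m p e t, Icell m p e t ->
  forall z, val m p z = t * ind m (fst (ends m e)) z + (1 - t) * ind m (snd (ends m e)) z.
Proof.
  intros. destruct H as [H|[[H1 H2]|[H1 H2]]]; subst; simpl; auto; ring.
Qed.

Lemma ends_S : forall m e q, ends (S m) (e, q) =
  match q with
  | Q_ua => (inl (fst (ends m e)), inr (e, false))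
  | Q_av => (inr (e, false), inl (snd (ends m e)))
  | Q_vb => (inl (snd (ends m e)), inr (e, true))
  | Q_bu => (inr (e, true), inl (fst (ends m e)))
  end.
Proof. intros. simpl. destruct (ends m e). destruct q; reflexivity. Qed.

Lemma down_I : forall m p e q t, Icell (S m) p (e, q) t -> Icell m (down m p) e (g q t).
Proof.
  intros. unfold Icell in *. rewrite ends_S in H.
  destruct H as [H|[[H1 H2]|[H1 H2]]]; subst.
  - left. reflexivity.
  - destruct q; simpl; unfold g.
    + right; left. split; auto. field.
    + left. f_equal. field.
    + right; right. split; auto. field.
    + left. f_equal. field.
  - destruct q; simpl; unfold g.
    + left. f_equal. field.
    + right; right. split; auto. field.
    + left. f_equal. field.
    + right; left. split; auto. field.
Qed.

Definition cst r := 16 * r^2 / (4 * r^2 - 1).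

Lemma UB_I : forall r, / 2 < r -> forall m p p' e t t', Icell m p e t -> Icell m p' e t' ->
  Sq r m p p' <= cst r * (t - t')^2 * (r^m)^2.
Proof.
  intros r Hr. assert (H4 : 0 < 4 * r^2 - 1) by nra.
  assert (Hc : cst r = 4 + cst r / (4 * r^2)).
  { unfold cst. field. split; nra. }
  assert (Hc4 : 4 <= cst r).
  { unfold cst. apply Rmult_le_reg_r with (4 * r^2 - 1); auto.
    unfold Rdiv. rewrite Rmult_assoc, Rinv_l by lra. nra. }
  induction m; intros.
  - rewrite Sq_0.
    assert (Bl 0 p p' <= 2 * (t - t')^2 + 2 * (t' - t)^2).
    { apply Bl_upper with (u := fst (ends 0 e)) (v := snd (ends 0 e)).
      intros z. rewrite (val_I _ _ _ _ H), (val_I _ _ _ _ H0). ring. }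
    simpl. pose proof (pow2_ge_0 (t - t')). nra.
  - destruct e as [e q]. rewrite Sq_S.
    pose proof (IHm _ _ _ _ _ (down_I _ _ _ _ _ H) (down_I _ _ _ _ _ H0)) as IH.
    assert (HB : Bl (S m) p p' <= 2 * (t - t')^2 + 2 * (t' - t)^2).
    { apply Bl_upper with (u := fst (ends (S m) (e,q))) (v := snd (ends (S m) (e,q))).
      intros z. rewrite (val_I _ _ _ _ H), (val_I _ _ _ _ H0). ring. }
    assert (Eg : (g q t - g q t')^2 = (t - t')^2 / 4) by (destruct q; simpl; field).
    rewrite Eg in IH.
    assert (Er : (r ^ S m)^2 = r^2 * (r^m)^2) by (simpl; ring).
    rewrite Er.
    set (X := (t - t')^2) in *. set (Y := (r^m)^2) in *.
    assert (0 <= X) by apply pow2_ge_0. assert (0 <= Y) by apply pow2_ge_0.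
    replace ((t' - t)^2) with X in HB by (unfold X; ring).
    assert (HcY : cst r * X * (r^2 * Y) = 4 * X * (r^2 * Y) + cst r * (X / 4) * Y).
    { rewrite Hc at 1. field. nra. }
    rewrite HcY. assert (0 <= r^2) by apply pow2_ge_0. nra.
Qed.

Lemma walk_app : forall eps n x y z L1 L2, walk eps n x y L1 -> walk eps n y z L2 -> walk eps n x z (L1 + L2).
Proof.
  intros. induction H.
  - replace (0 + L2) with L2 by ring. auto.
  - replace (w + L + L2) with (w + (L + L2)) by ring. econstructor; eauto.
Qed.

Lemma walk_edge : forall eps n x y w, (In (x, y, w) (WE eps n) \/ In (y, x, w) (WE eps n)) -> walk eps n x y w.
Proof. intros. replace w with (w + 0) by ring. econstructor; eauto. constructor. Qed.

Lemma walk_rev : forall eps n x y L, walk eps n x y L -> walk eps n y x L.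
Proof.
  intros. induction H.
  - constructor.
  - rewrite Rplus_comm. eapply walk_app; eauto. apply walk_edge. tauto.
Qed.

Lemma WE_inl : forall eps m x y w, In (x, y, w) (WE eps m) ->
  In ((inl x : Vtype (S m)), (inl y : Vtype (S m)), w) (WE eps (S m)).
Proof.
  intros. simpl. apply in_or_app. left.
  apply in_map with (f := fun t : Vtype m * Vtype m * R =>
             let '(u, v, w) := t in ((inl u : Vtype (S m)), (inl v : Vtype (S m)), w)) in H.
  exact H.
Qed.

Lemma walk_inl : forall eps m a b L, walk eps m a b L -> walk eps (S m) (inl a) (inl b) L.
Proof.
  intros. induction H.
  - constructor.
  - econstructor; eauto. destruct H; [left|right]; apply WE_inl; auto.
Qed.

Lemma WE_new : forall eps m e,
  In (fst (ends (S m) e), snd (ends (S m) e), (/2 + eps)^(S m)) (WE eps (S m)).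
Proof.
  intros. cbn [WE]. apply in_or_app. right.
  apply in_map_iff. exists e. split.
  - destruct (ends (S m) e); reflexivity.
  - apply Elist_complete.
Qed.

Lemma WE_inv : forall eps m x y w, In (x, y, w) (WE eps (S m)) ->
  (exists x' y', x = inl x' /\ y = inl y' /\ In (x', y', w) (WE eps m)) \/
  (exists e, ends (S m) e = (x, y) /\ w = (/2 + eps)^(S m)).
Proof.
  intros. cbn [WE] in H. apply in_app_or in H. destruct H as [H|H].
  - left. apply in_map_iff in H. destruct H as [[[u v] w'] [E H]].
    inversion E; subst. eauto.
  - right. apply in_map_iff in H. destruct H as [e [E _]].
    exists e. destruct (ends (S m) e) eqn:Ee. inversion E; subst. auto.
Qed.

Lemma WE_0 : forall eps x y w, In (x, y, w) (WE eps 0) -> x = false /\ y = true /\ w = 1.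
Proof. intros. simpl in H. destruct H as [H|[]]. inversion H; auto. Qed.

Definition Kc r := 4 / (1 - r^2) + cst r / (4 * r^2).

Lemma Bl_PV : forall m (x y : Vtype m), Bl m (PV x) (PV y) <= 4.
Proof.
  intros. assert (Bl m (PV x) (PV y) <= 2 * 1^2 + 2 * (-1)^2).
  { apply Bl_upper with (u := x) (v := y). intros. simpl. ring. }
  lra.
Qed.

Lemma EdgeUB : forall eps, 0 < eps < /2 -> forall n x y w, In (x, y, w) (WE eps n) ->
  exists i, w = (/2 + eps)^i /\
  Sq (/2 + eps) n (PV x) (PV y) <= Kc (/2+eps) * ((/2+eps)^i)^2 - 4 * ((/2+eps)^(S n))^2 / (1 - (/2+eps)^2).
Proof.
  intros eps Heps. remember (/2 + eps) as r eqn:Hr.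
  assert (Hr1 : / 2 < r) by lra. assert (Hr2 : r < 1) by lra.
  assert (H1r : 0 < 1 - r^2) by nra. assert (Hr4 : 0 < 4 * r^2) by nra.
  assert (Hcp : 0 <= cst r / (4 * r^2)).
  { unfold cst. apply Rmult_le_pos; [|left; apply Rinv_0_lt_compat; auto].
    apply Rmult_le_pos; [|left; apply Rinv_0_lt_compat; nra]. nra. }
  induction n; intros.
  - apply WE_0 in H. destruct H as [-> [-> ->]]. exists 0%nat. split; [simpl; auto|].
    rewrite Sq_0. pose proof (Bl_PV 0 false true).
    assert (E : Kc r * (r^0)^2 - 4 * (r ^ 1)^2 / (1 - r^2) = 4 + cst r / (4 * r^2)).
    { unfold Kc. simpl. field. lra. }
    rewrite E. replace ((r^0)^2) with 1 by (simpl; ring). lra.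
  - apply WE_inv in H. rewrite <- Hr in H. destruct H as [[x' [y' [-> [-> H]]]]|[e [Ee Ew]]].
    + destruct (IHn _ _ _ H) as [i [Ei Hi]]. exists i. split; auto.
      rewrite Sq_S. cbn [down].
      pose proof (Bl_PV (S n) (inl x' : Vtype (S n)) (inl y' : Vtype (S n))).
      assert (E : 4 * (r^(S n))^2 - 4 * (r^(S n))^2 / (1 - r^2) = - 4 * (r^(S (S n)))^2 / (1 - r^2)).
      { simpl. field. lra. }
      pose proof (pow2_ge_0 (r^(S n))).
      assert ((r ^ S n) ^ 2 * Bl (S n) (PV (inl x' : Vtype (S n))) (PV (inl y' : Vtype (S n))) <= (r ^ S n) ^ 2 * 4).
      { apply Rmult_le_compat_l; auto. }
      lra.
    + exists (S n). split; auto.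
      destruct e as [e q].
      assert (Hx : Icell (S n) (PV x) (e, q) 1) by (right; left; rewrite Ee; auto).
      assert (Hy : Icell (S n) (PV y) (e, q) 0) by (right; right; rewrite Ee; auto).
      pose proof (UB_I r Hr1 n _ _ _ _ _ (down_I _ _ _ _ _ Hx) (down_I _ _ _ _ _ Hy)) as HU.
      assert (Eg : (g q 1 - g q 0)^2 = /4) by (destruct q; simpl; field).
      rewrite Eg in HU. rewrite Sq_S.
      pose proof (Bl_PV (S n) x y).
      assert (E : Kc r * (r ^ S n) ^ 2 - 4 * (r ^ S (S n)) ^ 2 / (1 - r ^ 2)
                  = 4 * (r^(S n))^2 + cst r * / 4 * (r^n)^2).
      { unfold Kc. simpl. field. lra. }
      rewrite E. pose proof (pow2_ge_0 (r^(S n))).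
      assert ((r ^ S n) ^ 2 * Bl (S n) (PV x) (PV y) <= (r ^ S n) ^ 2 * 4).
      { apply Rmult_le_compat_l; auto. }
      lra.
Qed.

Lemma Kc_pos : forall eps, 0 < eps < /2 -> 0 < Kc (/2 + eps).
Proof.
  intros. unfold Kc, cst. set (r := /2+eps).
  assert (/2 < r < 1) by (unfold r; lra).
  assert (0 < 1 - r^2) by nra. assert (0 < 4 * r^2 - 1) by nra.
  assert (0 < 4 / (1 - r^2)) by (apply Rdiv_lt_0_compat; lra).
  assert (0 < 16 * r ^ 2 / (4 * r ^ 2 - 1)) by (apply Rdiv_lt_0_compat; nra).
  assert (0 < 16 * r ^ 2 / (4 * r ^ 2 - 1) / (4 * r ^ 2)) by (apply Rdiv_lt_0_compat; nra).
  lra.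
Qed.

Lemma EdgeLip : forall eps, 0 < eps < /2 -> forall n x y w, In (x, y, w) (WE eps n) ->
  0 < w /\ sqrt (Sq (/2 + eps) n (PV x) (PV y)) <= sqrt (Kc (/2+eps)) * w.
Proof.
  intros. destruct (EdgeUB eps H n x y w H0) as [i [Ew Hi]].
  set (r := /2 + eps) in *.
  assert (/2 < r < 1) by (unfold r; lra).
  assert (0 < 1 - r^2) by nra.
  assert (Hw : 0 < w) by (subst w; apply pow_lt; lra).
  split; auto.
  assert (0 <= 4 * (r ^ S n) ^ 2 / (1 - r ^ 2)).
  { apply Rmult_le_pos; [pose proof (pow2_ge_0 (r^(S n))); lra|left; apply Rinv_0_lt_compat; lra]. }
  rewrite <- Ew in Hi.
  rewrite <- (sqrt_Rsqr w) by lra. rewrite <- sqrt_mult_alt by (pose proof (Kc_pos eps H); fold r in H4; lra).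
  apply sqrt_le_1_alt. unfold Rsqr. replace (w^2) with (w*w) in Hi by ring. lra.
Qed.

Lemma walk_nonneg : forall eps, 0 < eps < /2 -> forall n x y L, walk eps n x y L -> 0 <= L.
Proof.
  intros. induction H0; [lra|].
  assert (0 < w).
  { destruct H0 as [H0|H0]; apply (EdgeLip eps H n _ _ _ H0). }
  lra.
Qed.

Lemma WalkLip : forall eps, 0 < eps < /2 -> forall n x y L, walk eps n x y L ->
  sqrt (Sq (/2 + eps) n (PV x) (PV y)) <= sqrt (Kc (/2+eps)) * L.
Proof.
  intros. induction H0.
  - unfold Sq. replace (sqd (coords (/2+eps) n (PV x)) (coords (/2+eps) n (PV x))) with 0.
    + rewrite sqrt_0. lra.
    + generalize (coords (/ 2 + eps) n (PV x)). induction l; simpl; auto. rewrite <- IHl. ring.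
  - eapply Rle_trans; [apply Sq_tri with (p' := PV y)|].
    assert (sqrt (Sq (/ 2 + eps) n (PV x) (PV y)) <= sqrt (Kc (/ 2 + eps)) * w).
    { destruct H0 as [H0|H0].
      - apply (EdgeLip eps H n _ _ _ H0).
      - rewrite Sq_sym. apply (EdgeLip eps H n _ _ _ H0). }
    lra.
Qed.

Inductive PR (n : nat) (x : Vtype n) : forall m, posn m -> Prop :=
| PR_top : PR n x n (PV x)
| PR_down : forall m p, PR n x (S m) p -> PR n x m (down m p).

Inductive PR2 (n : nat) (x y : Vtype n) : forall m, posn m -> posn m -> Prop :=
| PR2_top : PR2 n x y n (PV x) (PV y)
| PR2_down : forall m p p', PR2 n x y (S m) p p' -> PR2 n x y m (down m p) (down m p').

Inductive LR : forall m n, Vtype m -> Vtype n -> Prop :=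
| LR_refl : forall m z, LR m m z z
| LR_up : forall m n z w, LR (S m) n (inl z : Vtype (S m)) w -> LR m n z w.

Lemma LR_le : forall m n z w, LR m n z w -> (m <= n)%nat.
Proof. intros. induction H; lia. Qed.

Lemma LR_uniq : forall m n z w1, LR m n z w1 -> forall w2, LR m n z w2 -> w1 = w2.
Proof.
  intros m n z w1 H. induction H; intros w2 H2.
  - dependent destruction H2; auto. apply LR_le in H2. lia.
  - dependent destruction H2.
    + apply LR_le in H. lia.
    + apply IHLR; auto.
Qed.

Lemma walk_LR : forall eps m n a a', LR m n a a' -> forall b L, walk eps m a b L ->
  exists b', LR m n b b' /\ walk eps n a' b' L.
Proof.
  intros eps m n a a' H. induction H; intros.
  - exists b. split; auto. constructor.
  - apply walk_inl in H0. destruct (IHLR _ _ H0) as [b' [Hb Hw]].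
    exists b'. split; auto. constructor. auto.
Qed.

Lemma PR2_PR : forall n x y m p p', PR2 n x y m p p' -> PR n x m p /\ PR n y m p'.
Proof. intros. induction H; split; try constructor; tauto. Qed.

Lemma PR2_Sq : forall r n x y m p p', PR2 n x y m p p' -> Sq r m p p' <= Sq r n (PV x) (PV y).
Proof.
  intros. induction H; [lra|]. pose proof (Sq_down_le r m p p'). lra.
Qed.

Lemma mid_adj : forall eps m e s z, (z = fst (ends m e) \/ z = snd (ends m e)) ->
  walk eps (S m) (inr (e, s) : Vtype (S m)) (inl z) ((/2 + eps)^(S m)).
Proof.
  intros. apply walk_edge.
  destruct s; destruct H as [->| ->].
  - pose proof (WE_new eps m (e, Q_bu)) as W. rewrite ends_S in W. cbn [fst snd] in W. first [left; exact W | right; exact W].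
  - pose proof (WE_new eps m (e, Q_vb)) as W. rewrite ends_S in W. cbn [fst snd] in W. first [left; exact W | right; exact W].
  - pose proof (WE_new eps m (e, Q_ua)) as W. rewrite ends_S in W. cbn [fst snd] in W. first [left; exact W | right; exact W].
  - pose proof (WE_new eps m (e, Q_av)) as W. rewrite ends_S in W. cbn [fst snd] in W. first [left; exact W | right; exact W].
Qed.

Lemma step_rev : forall eps, 0 < eps -> forall m (p : posn (S m)) z, inS m (down m p) z ->
  exists z', inS (S m) p z' /\ exists L, walk eps (S m) z' (inl z) L /\ L <= (/2 + eps)^(S m).
Proof.
  intros eps Heps m p z H.
  assert (Hp : 0 <= (/2 + eps)^(S m)) by (apply pow_le; lra).
  destruct p as [x|[e q] t].
  - destruct x as [y|[e s]]; simpl in H.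
    + subst. exists (inl y). split; [reflexivity|]. exists 0. split; [constructor|lra].
    + exists (inr (e, s)). split; [reflexivity|]. exists ((/2+eps)^(S m)). split; [|lra].
      apply mid_adj. auto.
  - simpl in H. 
    destruct q.
    + exists (inr (e, false)). split; [unfold inS; rewrite ends_S; cbn [fst snd]; auto|].
      exists ((/2+eps)^(S m)). split; [apply mid_adj; auto|lra].
    + exists (inr (e, false)). split; [unfold inS; rewrite ends_S; cbn [fst snd]; auto|].
      exists ((/2+eps)^(S m)). split; [apply mid_adj; auto|lra].
    + exists (inr (e, true)). split; [unfold inS; rewrite ends_S; cbn [fst snd]; auto|].
      exists ((/2+eps)^(S m)). split; [apply mid_adj; auto|lra].
    + exists (inr (e, true)). split; [unfold inS; rewrite ends_S; cbn [fst snd]; auto|].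
      exists ((/2+eps)^(S m)). split; [apply mid_adj; auto|lra].
Qed.

Lemma PR_walk : forall eps, 0 < eps < /2 -> forall n x m p, PR n x m p -> forall z, inS m p z ->
  exists w L, LR m n z w /\ walk eps n x w L /\ L <= (/2+eps)^(S m) / (1 - (/2 + eps)).
Proof.
  intros eps Heps n x m p H. induction H; intros z Hz.
  - simpl in Hz. subst. exists x, 0. split; [constructor|]. split; [constructor|].
    apply Rmult_le_pos; [apply pow_le; lra|left; apply Rinv_0_lt_compat; lra].
  - destruct (step_rev eps (proj1 Heps) m p z Hz) as [z' [Hz' [L0 [Hw0 HL0]]]].
    destruct (IHPR z' Hz') as [w' [L' [HLR [Hw' HL']]]].
    destruct (walk_LR eps _ _ _ _ HLR _ _ Hw0) as [w [HLR2 Hw2]].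
    exists w, (L' + L0). split; [constructor; auto|]. split; [eapply walk_app; eauto|].
    assert (Hr : /2 + eps < 1) by lra.
    set (r := /2 + eps) in *. clearbody r.
    assert (E : r^(S m) / (1 - r) = r ^ (S (S m)) / (1 - r) + r ^ (S m)).
    { simpl. field. lra. }
    lra.
Qed.

Lemma TopDown : forall n x y m p p', PR2 n x y m p p' -> ~ share m p p' ->
  (exists j q1 q1', PR2 n x y (S j) q1 q1' /\ ~ share (S j) q1 q1' /\ share j (down j q1) (down j q1')) \/
  (exists q q', PR2 n x y 0 q q' /\ ~ share 0 q q').
Proof.
  intros n x y m. induction m; intros.
  - right. eauto.
  - destruct (Classical_Prop.classic (share m (down m p) (down m p'))).
    + left. exists m, p, p'. auto.
    + apply (IHm (down m p) (down m p')); auto. constructor; auto.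
Qed.

Lemma inS_ex : forall m (p : posn m), exists z, inS m p z.
Proof. intros. destruct p; simpl; eauto. Qed.

Lemma LB : forall eps, 0 < eps < /2 -> forall n (x y : Vtype n),
  exists L, walk eps n x y L /\ L^2 <= 8 / (1 - (/2+eps))^2 * Sq (/2 + eps) n (PV x) (PV y).
Proof.
  intros eps Heps n x y.
  assert (Hr1 : /2 < /2 + eps < 1) by lra.
  assert (H1r : 0 < 1 - (/2 + eps)) by lra.
  destruct (Classical_Prop.classic (share n (PV x) (PV y))) as [Hs|Hs].
  - destruct Hs as [z [Hx Hy]]. simpl in Hx, Hy. subst.
    exists 0. split; [constructor|].
    pose proof (Sq_nonneg (/2+eps) n (PV y) (PV y)).
    assert (0 <= 8 / (1 - (/ 2 + eps)) ^ 2).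
    { apply Rmult_le_pos; [lra|]. left; apply Rinv_0_lt_compat. nra. }
    replace (0^2) with 0 by ring. apply Rmult_le_pos; auto.
  - destruct (TopDown n x y n (PV x) (PV y) (PR2_top n x y) Hs) as
      [[j [q1 [q1' [HP [Hns [z [Hz1 Hz2]]]]]]]|[q [q' [HP Hns]]]].
    + pose proof (PR2_down _ _ _ _ _ _ HP) as HP'.
      destruct (PR2_PR _ _ _ _ _ _ HP') as [Px Py].
      destruct (PR_walk eps Heps _ _ _ _ Px z Hz1) as [w1 [L1 [LR1 [W1 HL1]]]].
      destruct (PR_walk eps Heps _ _ _ _ Py z Hz2) as [w2 [L2 [LR2 [W2 HL2]]]].
      rewrite <- (LR_uniq _ _ _ _ LR1 _ LR2) in W2.
      exists (L1 + L2). split; [eapply walk_app; eauto; apply walk_rev; eauto|].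
      pose proof (Bl_lower _ _ _ Hns) as HB.
      pose proof (Sq_ge_B (/2+eps) (S j) q1 q1') as HSB.
      pose proof (PR2_Sq (/2+eps) _ _ _ _ _ _ HP) as HPS.
      pose proof (walk_nonneg eps Heps _ _ _ _ W1).
      pose proof (walk_nonneg eps Heps _ _ _ _ W2).
      set (r := /2 + eps) in *. clearbody r.
      set (a := r ^ S j) in *.
      assert (Ha : 0 <= a) by (unfold a; apply pow_le; lra).
      clearbody a.
      assert (HL : L1 + L2 <= 2 * a / (1 - r)) by (unfold Rdiv in *; lra).
      assert (HSa : a^2 / 2 <= Sq r n (PV x) (PV y)).
      { assert (a^2 * /2 <= a^2 * Bl (S j) q1 q1') by (apply Rmult_le_compat_l; [apply pow2_ge_0|lra]).
        unfold Rdiv. lra. }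
      assert (HL2q : (L1 + L2)^2 <= (2 * a / (1 - r))^2).
      { apply pow_incr. lra. }
      eapply Rle_trans; [exact HL2q|].
      replace ((2 * a / (1 - r))^2) with (8 / (1 - r)^2 * (a^2 / 2)) by (field; lra).
      apply Rmult_le_compat_l; auto.
      apply Rmult_le_pos; [lra|]. left; apply Rinv_0_lt_compat. nra.
    + destruct (PR2_PR _ _ _ _ _ _ HP) as [Px Py].
      destruct (inS_ex 0 q) as [a Ha]. destruct (inS_ex 0 q') as [b Hb].
      destruct (PR_walk eps Heps _ _ _ _ Px a Ha) as [w1 [L1 [LR1 [W1 HL1]]]].
      destruct (PR_walk eps Heps _ _ _ _ Py b Hb) as [w2 [L2 [LR2 [W2 HL2]]]].
      assert (Hab : a <> b) by (intro E; subst; apply Hns; exists b; auto).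
      assert (W0 : walk eps 0 a b 1).
      { apply walk_edge. destruct a, b; try tauto; simpl; auto. }
      destruct (walk_LR eps _ _ _ _ LR1 _ _ W0) as [b' [LRb Wb]].
      rewrite (LR_uniq _ _ _ _ LRb _ LR2) in Wb.
      exists (L1 + 1 + L2). split.
      { eapply walk_app; [eapply walk_app; eauto|]. apply walk_rev; eauto. }
      pose proof (Bl_lower _ _ _ Hns) as HB.
      pose proof (Sq_ge_B (/2+eps) 0 q q') as HSB.
      pose proof (PR2_Sq (/2+eps) _ _ _ _ _ _ HP) as HPS.
      pose proof (walk_nonneg eps Heps _ _ _ _ W1).
      pose proof (walk_nonneg eps Heps _ _ _ _ W2).
      simpl in HL1, HL2, HSB.
      set (r := /2 + eps) in *. clearbody r.
      assert (HL : L1 + 1 + L2 <= 2 / (1 - r)).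
      { replace (r * 1 / (1 - r)) with (r / (1 - r)) in * by (field; lra).
        assert (E : 2 / (1 - r) = 2 * (r / (1 - r)) + 1 + (1 - r) / (1 - r)) by (field; lra).
        replace ((1 - r) / (1 - r)) with 1 in E by (field; lra). lra. }
      assert (HSa : / 2 <= Sq r n (PV x) (PV y)) by lra.
      assert (HL2' : (L1 + 1 + L2)^2 <= (2 / (1 - r))^2) by (apply pow_incr; lra).
      eapply Rle_trans; [exact HL2'|].
      replace ((2 / (1 - r))^2) with (8 / (1 - r)^2 * / 2) by (field; lra).
      apply Rmult_le_compat_l; auto.
      apply Rmult_le_pos; [lra|]. left; apply Rinv_0_lt_compat. nra.
Qed.

Lemma fin_sum : forall (gg : nat -> R) N, (forall i, (N <= i)%nat -> gg i = 0) ->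
  infinite_sum gg (sum_f_R0 gg N).
Proof.
  intros gg N H e He. exists N. intros k Hk.
  assert (E : sum_f_R0 gg k = sum_f_R0 gg N).
  { induction k.
    - assert (N = 0%nat) by lia. subst. auto.
    - destruct (Nat.eq_dec (S k) N) as [E|E]; [subst; auto|].
      simpl. rewrite IHk by lia. rewrite H by lia. ring. }
  rewrite E. unfold Rdist. rewrite Rminus_diag, Rabs_R0. lra.
Qed.

Lemma sum_nth : forall l1 l2, length l1 = length l2 ->
  sum_f_R0 (fun i => (nth i l1 0 - nth i l2 0)^2) (length l1) = sqd l1 l2.
Proof.
  induction l1 as [|a l1 IHl1]; destruct l2 as [|b l2]; intros; try discriminate.
  - simpl. ring.
  - change (length (a :: l1)) with (S (length l1)). rewrite decomp_sum by lia.
    simpl in H. injection H as H.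
    change (sqd (a :: l1) (b :: l2)) with ((a - b)^2 + sqd l1 l2).
    rewrite <- (IHl1 l2 H). reflexivity.
Qed.

Lemma sqdist_eq : forall l1 l2 S, length l1 = length l2 ->
  infinite_sum (fun i => (nth i l1 0 - nth i l2 0)^2) S -> S = sqd l1 l2.
Proof.
  intros. rewrite <- sum_nth by auto.
  eapply uniqueness_sum; eauto. apply fin_sum.
  intros. rewrite !nth_overflow by lia. ring.
Qed.

Theorem mainTheorem12 :
  forall eps : R, 0 < eps < /2 ->
  exists C : R,
    forall n : nat,
      exists f : Vtype n -> nat -> R,
        (forall x, in_l2 (f x)) /\
        exists s : R, 0 < s /\
          forall (x y : Vtype n) (d S : R),
            is_dist eps n x y d -> l2_sqdist (f x) (f y) S ->
            s * d <= sqrt S <= C * s * d.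
Proof.
  intros eps Heps.
  set (r := /2 + eps).
  assert (Hr : /2 < r < 1) by (unfold r; lra).
  set (M := sqrt (Kc r)).
  assert (HM : 0 < M) by (apply sqrt_lt_R0; apply Kc_pos; auto).
  set (s := (1 - r) / 3).
  assert (Hs : 0 < s) by (unfold s; lra).
  exists (M / s). intros n.
  exists (fun x k => nth k (coords r n (PV x)) 0). split.
  { intros x. unfold in_l2.
    exists (sum_f_R0 (fun i => (nth i (coords r n (PV x)) 0)^2) (length (coords r n (PV x)))).
    apply fin_sum. intros. rewrite nth_overflow by lia. ring. }
  exists s. split; auto.
  intros x y d S [Hlow Happ] HS.
  unfold l2_sqdist in HS. apply sqdist_eq in HS; [|apply coords_len].
  fold (Sq r n (PV x) (PV y)) in HS. subst S.
  split.
  - destruct (LB eps Heps n x y) as [L [HW HL]]. fold r in HL.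
    pose proof (Hlow L HW) as HdL.
    pose proof (walk_nonneg eps Heps _ _ _ _ HW) as HL0.
    pose proof (Sq_nonneg r n (PV x) (PV y)) as HS0.
    apply Rle_trans with (s * L); [apply Rmult_le_compat_l; lra|].
    rewrite <- (sqrt_pow2 (s * L)) by nra.
    apply sqrt_le_1_alt.
    assert (E : (s * L)^2 = (1 - r)^2 / 9 * L^2) by (unfold s; field).
    rewrite E.
    assert (H1r : 0 < (1 - r)^2) by nra.
    apply Rle_trans with ((1 - r)^2 / 9 * (8 / (1 - r)^2 * Sq r n (PV x) (PV y))).
    + apply Rmult_le_compat_l; auto. apply Rmult_le_pos; lra.
    + replace ((1 - r)^2 / 9 * (8 / (1 - r)^2 * Sq r n (PV x) (PV y)))
        with (8 / 9 * Sq r n (PV x) (PV y)) by (field; lra). lra.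
  - replace (M / s * s * d) with (M * d) by (field; lra).
    destruct (Rle_dec (sqrt (Sq r n (PV x) (PV y))) (M * d)) as [Hle|Hgt]; auto.
    exfalso. set (Q := sqrt (Sq r n (PV x) (PV y))) in *.
    assert (He : 0 < (Q - M * d) / (2 * M)).
    { apply Rdiv_lt_0_compat; lra. }
    destruct (Happ _ He) as [L [HW HL]].
    pose proof (WalkLip eps Heps _ _ _ _ HW) as HQ. fold r M Q in HQ.
    assert (M * L < M * (d + (Q - M * d) / (2 * M))) by (apply Rmult_lt_compat_l; auto).
    replace (M * (d + (Q - M * d) / (2 * M))) with (M * d + (Q - M * d) / 2) in H by (field; lra).
    lra.
Qed.
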